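(* Let $P=(X,\leq)$ be a $(3+1)$-free partially ordered set with no infinite antichains. Then there exist a partition of $X$ into antichains and a chain $C\subseteq X$ of $P$ such that $C$ intersects every member of the partition.
   Context: A poset is $(3+1)$-free if it contains no induced subposet isomorphic to the disjoint union of a $3$-element chain and a $1$-element chain (i.e., there are no elements $a<b<c$ and $d$ with $d$ incomparable to each of $a,b,c$). An antichain is a set of pairwise incomparable elements; a chain is a set of pairwise comparable elements. *)

(* Defs.v *)
From mathcomp Require Import all_boot all_order.
Set Implicit Arguments. Unset Strict Implicit. Unset Printing Implicit Defensive.
Import Order.Theory.
Local Open Scope order_scope.

Definition antichain {d} {T : porderType d} (A : T -> Prop) : Prop :=
  forall x y : T, A x -> A y -> x <> y -> x >< y.

Definition chain {d} {T : porderType d} (C : T -> Prop) : Prop :=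
  forall x y : T, C x -> C y -> x >=< y.

Definition three_plus_one_free d (T : porderType d) : Prop :=
  ~ exists a b c e : T, [/\ a < b, b < c, e >< a, e >< b & e >< c].

Definition finite_set {T : eqType} (A : T -> Prop) : Prop :=
  exists s : seq T, forall x, A x -> x \in s.

Definition no_infinite_antichain d (T : porderType d) : Prop :=
  forall A : T -> Prop, antichain A -> finite_set A.

Definition is_partition {T : Type} (Pt : (T -> Prop) -> Prop) : Prop :=
  [/\ forall B, Pt B -> exists x, B x,
      forall x, exists B, Pt B /\ B x
    & forall B B', Pt B -> Pt B' -> (exists x, B x /\ B' x) -> B = B'].

(* Main.v *)
Require Import Defs.
From mathcomp Require Import all_boot all_order.
Import Order.Theory.
Local Open Scope order_scope.
From mathcomp Require Import boolp classical_sets.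
Set Implicit Arguments. Unset Strict Implicit. Unset Printing Implicit Defensive.

Section Compact.
Variable T : eqType.
Variable D : T -> T -> Prop.
Variable R : T -> T -> T -> T -> Prop.
Hypothesis Dfin : forall x, exists s : seq T, forall v, D x v -> v \in s.

Definition Good (Rm : (T * T) -> Prop) : Prop :=
  forall s : seq T, exists f : T -> T,
    (forall x, x \in s -> D x (f x) /\ ~ Rm (x, f x)) /\
    (forall x y, x \in s -> y \in s -> R x (f x) y (f y)).

Hypothesis Good0 : Good (fun _ => False).

Lemma compactness : exists f : T -> T, forall x y, R x (f x) y (f y).
Proof.
have [ds Hds] := choice Dfin.
have [A [GA Amax]] : exists A, Good A /\ forall B, proper A B -> ~ Good B.
  apply: Zorn_bigcup => F FP Ftot s.
  pose L := [seq (x, v) | x <- s, v <- ds x].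
  have : forall L : seq (T * T), exists B, (B = (fun _ => False) \/ F B) /\
      forall q, q \in L -> bigcup F id q -> B q.
    elim=> [|q L0 [B [HB HBq]]].
      by exists (fun _ => False); split; [left|].
    have [[X FX Xq]|nq] := pselect (bigcup F id q).
      case: HB => [Be|FB].
        exists X; split; [by right|] => q'; rewrite inE => /orP[/eqP->//|q'L0].
        by move=> /(HBq _ q'L0); rewrite Be.
      have [BX|XB] := Ftot _ _ FB FX.
        exists X; split; [by right|] => q'; rewrite inE => /orP[/eqP->//|q'L0].
        by move=> /(HBq _ q'L0) /BX.
      exists B; split; [by right|] => q'; rewrite inE => /orP[/eqP->|q'L0].
        by move=> _; apply: XB.
      exact: HBq.
    exists B; split => // q'; rewrite inE => /orP[/eqP->|q'L0]; first by [].
    exact: HBq.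
  move=> /(_ L) [B [HB HBq]].
  have GB : Good B by case: HB => [->//|/FP].
  have [f [Hf1 Hf2]] := GB s; exists f; split => // x xs.
  have [Dx nB] := Hf1 x xs; split => // Hu; apply: nB; apply: HBq Hu.
  by rewrite /L; apply/allpairsPdep; exists x, (f x); split => //; apply: Hds.
pose E x v := D x v /\ ~ A (x, v).
have Eex x : exists v, E x v.
  have [f [Hf _]] := GA [:: x]; exists (f x); apply: Hf; by rewrite inE.
have Euniq x v w : E x v -> E x w -> v = w.
  move=> [Dv Av] [Dw Aw]; apply: contrapT => vw.
  pose B1 q := A q \/ q = (x, v).
  pose B2 q := A q \/ (q.1 = x /\ q.2 <> v).
  have nG1 : ~ Good B1.
    apply: Amax; split; first by move=> q Aq; left.
    by move=> /(_ (x, v)) H; apply: Av; apply: H; right.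
  have nG2 : ~ Good B2.
    apply: Amax; split; first by move=> q Aq; left.
    by move=> /(_ (x, w)) H; apply: Aw; apply: H; right; split => //= wv; apply: vw.
  have : exists s1 : seq T, ~ (exists f : T -> T,
    (forall x, x \in s1 -> D x (f x) /\ ~ B1 (x, f x)) /\
    (forall x y, x \in s1 -> y \in s1 -> R x (f x) y (f y))).
    apply: contrapT => H.
    apply: nG1 => s.
    apply: contrapT => H'.
    by apply: H; exists s.
  move=> [s1 Hs1].
  have : exists s2 : seq T, ~ (exists f : T -> T,
    (forall x, x \in s2 -> D x (f x) /\ ~ B2 (x, f x)) /\
    (forall x y, x \in s2 -> y \in s2 -> R x (f x) y (f y))).
    apply: contrapT => H.
    apply: nG2 => s.
    apply: contrapT => H'.
    by apply: H; exists s.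
  move=> [s2 Hs2].
  have [f [Hf1 Hf2]] := GA (x :: s1 ++ s2).
  have sub1 y : y \in s1 -> y \in x :: s1 ++ s2 by move=> h; rewrite inE mem_cat h orbT.
  have sub2 y : y \in s2 -> y \in x :: s1 ++ s2 by move=> h; rewrite inE mem_cat h !orbT.
  have fxE : D x (f x) /\ ~ A (x, f x) by apply: Hf1; rewrite inE eqxx.
  have [fxv|fxv] := pselect (f x = v).
    apply: Hs2; exists f; split; last by move=> ? ? /sub2 ? /sub2 ?; apply: Hf2.
    move=> y /sub2 ys; have [Dy Ay] := Hf1 y ys; split => //.
    case => //= -[yx]; subst y; by rewrite fxv.
  apply: Hs1; exists f; split; last by move=> ? ? /sub1 ? /sub1 ?; apply: Hf2.
  move=> y /sub1 ys; have [Dy Ay] := Hf1 y ys; split => //.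
  case => // -[yx fyv]; subst y; exact: fxv fyv.
have [f Hf] := choice Eex.
exists f => x y.
have [g [Hg1 Hg2]] := GA [:: x; y].
have xs : x \in [:: x; y] by rewrite inE eqxx.
have ys : y \in [:: x; y] by rewrite !inE eqxx orbT.
have -> : f x = g x by apply: (Euniq x); [apply: Hf| apply: Hg1].
have -> : f y = g y by apply: (Euniq y); [apply: Hf| apply: Hg1].
exact: Hg2.
Qed.

End Compact.

Section Poset.
Variables (d : Order.disp_t) (T : porderType d).

Lemma incP (x y : T) : x >< y -> ~ (x <= y) /\ ~ (y <= x).
Proof. by rewrite /Order.comparable negb_or => /andP[/negP ? /negP ?]. Qed.

Lemma incI (x y : T) : ~ (x <= y) -> ~ (y <= x) -> x >< y.
Proof. by move=> /negP h1 /negP h2; rewrite /Order.comparable negb_or h1 h2. Qed.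

Lemma Nfin : three_plus_one_free T -> no_infinite_antichain T ->
  forall x : T, exists s : seq T, forall v, x >< v -> v \in s.
Proof.
move=> H31 HA x.
pose A v := x >< v.
pose M v := A v /\ forall w, A w -> ~ (w < v).
pose M' v := A v /\ exists w, A w /\ w < v.
have [s1 Hs1] : finite_set M.
  apply: HA => v w [Av Mv] [Aw Mw] vw; apply: incI => h.
    by apply: (Mw v Av); rewrite lt_neqAle h andbT; apply/eqP.
  by apply: (Mv w Aw); rewrite lt_neqAle h andbT; apply/eqP => /esym.
have [s2 Hs2] : finite_set M'.
  have key v w : M' v -> M' w -> v < w -> False.
    move=> [Av [u [Au uv]]] [Aw _] vw; apply: H31.
    by exists u, v, w, x.
  apply: HA => v w Mv Mw vw; apply: incI => h.
    by apply: (key v w) => //; rewrite lt_neqAle h andbT; apply/eqP.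
  by apply: (key w v) => //; rewrite lt_neqAle h andbT; apply/eqP => /esym.
exists (s1 ++ s2) => v Av; rewrite mem_cat.
have [[w [Aw wv]]|nw] := pselect (exists w, A w /\ w < v).
  by apply/orP; right; apply: Hs2; split => //; exists w.
apply/orP; left; apply: Hs1; split => // w Aw wv; apply: nw; by exists w.
Qed.

Lemma minbelow (s : seq T) : forall y, y \in s ->
  exists2 m, m \in s & (m <= y) && ~~ has (fun z => z < m) s.
Proof.
move=> y; move: {2}(count (fun z => z < y) s) (leqnn (count (fun z => z < y) s)) => k.
elim: k y => [|k IH] y Hk ys.
  exists y => //; rewrite lexx /= has_count; by move: Hk; case: count.
have [/hasP[z zs zy]|nh] := boolP (has (fun z => z < y) s); last first.
  by exists y => //; rewrite lexx.
have Hc : (count (fun w => (w < z)%O) s < count (fun z => (z < y)%O) s)%N.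
  have h1 := count_predUI (fun w => w < z) (pred1 z) s.
  have h2 : count (predI (fun w => w < z) (pred1 z)) s = 0.
    rewrite (@eq_count _ _ pred0) ?count_pred0 // => w /=.
    by apply/negP => /andP[wz /eqP wE]; move: wz; rewrite wE ltxx.
  have h3 : (0 < count (pred1 z) s)%N by rewrite -has_count has_pred1.
  have h4 : (count (predU (fun w => (w < z)%O) (pred1 z)) s <= count (fun z => (z < y)%O) s)%N.
    apply: sub_count => w /= /orP[wz|/eqP ->//]; exact: lt_trans wz zy.
  rewrite h2 addn0 in h1; rewrite h1 in h4; apply: leq_trans h4.
  by rewrite -addn1 leq_add2l.
have [m ms /andP[mz mmin]] := IH z (leq_trans Hc Hk) zs.
exists m => //; rewrite mmin andbT; exact: le_trans mz (ltW zy).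
Qed.


Definition mirsky_prop (s : seq T) (p : T -> T) :=
  [/\ (forall x, x \in s -> [/\ p x \in s, p x = x \/ x >< p x & p (p x) = p x]),
      (forall x y, x \in s -> y \in s -> (p x >=< p y) /\ (x < y -> p x <> p y))
    & (s != [::] -> exists2 c, c \in s & p c = c /\ forall x, x \in s -> c <= p x)].

Lemma mirsky_n n : forall s : seq T, (size s <= n)%N -> exists p, mirsky_prop s p.
Proof.
elim: n => [|n IH] s Hs.
  have -> : s = [::] by case: s Hs.
  by exists id; split => // x; rewrite in_nil.
have [->|sn] := eqVneq s [::].
  by exists id; split => // x; rewrite in_nil.
have [x0 x0s] : exists x0, x0 \in s by case: s sn {Hs} => // x0 s _; exists x0; rewrite inE eqxx.
pose a := fun x => has (fun y => y < x) s.
pose s' := filter a s.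
have [m0 m0s /andP[_ m0min]] := minbelow x0s.
have Hs' : (size s' <= n)%N.
  rewrite -ltnS; apply: leq_trans Hs; rewrite size_filter.
  rewrite ltn_neqAle count_size andbT; apply/negP.
  by rewrite -all_count => /allP /(_ m0 m0s); rewrite /a (negbTE m0min).
have [p' [H1 H2 H3]] := IH s' Hs'.
have [m [ms mmin] mlow] : exists m, [/\ m \in s, ~~ a m & forall x, x \in s' -> m < p' x].
  have [->|s'n] := eqVneq s' [::].
    by exists m0; split => // x; rewrite in_nil.
  have [c cs' [pc clow]] := H3 s'n.
  move: (cs'); rewrite mem_filter => /andP[/hasP[y ys yc] cs].
  have [m ms /andP[my mmin]] := minbelow ys.
  exists m; split => // x xs'.
  exact: lt_le_trans (le_lt_trans my yc) (clow x xs').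
exists (fun x => if a x then p' x else m); split.
- move=> x xs; case: ifP => ax.
  + have xs' : x \in s' by rewrite mem_filter ax xs.
    have [px1 px2 px3] := H1 x xs'.
    move: (px1); rewrite mem_filter => /andP[apx pxs].
    by rewrite apx; split.
  + rewrite (negbTE mmin); split => //.
    have [->|xm] := eqVneq x m; first by left.
    right; apply: incI => h.
      by move: mmin; rewrite /a => /negP; apply; apply/hasP; exists x => //; rewrite lt_neqAle h andbT.
    by move: ax; rewrite /a => /negP; apply; apply/hasP; exists m => //; rewrite lt_neqAle h andbT eq_sym.
- move=> x y xs ys; case: ifP => ax; case: ifP => ay.
  + have xs' : x \in s' by rewrite mem_filter ax xs.
    have ys' : y \in s' by rewrite mem_filter ay ys.
    exact: H2.
  + have xs' : x \in s' by rewrite mem_filter ax xs.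
    split; first by rewrite comparable_sym; apply: lt_comparable; apply: mlow.
    by move=> xy; move/negbT: ay; rewrite /a => /negP; case; apply/hasP; exists x.
  + have ys' : y \in s' by rewrite mem_filter ay ys.
    split; first by apply: lt_comparable; apply: mlow.
    by move=> _ /esym mE; move: (mlow y ys'); rewrite mE ltxx.
  + split; first exact: comparablexx.
    by move=> xy; move/negbT: ay; rewrite /a => /negP; case; apply/hasP; exists x.
- move=> _; exists m => //; rewrite (negbTE mmin); split => // x xs.
  case: ifP => ax //.
  have xs' : x \in s' by rewrite mem_filter ax xs.
  exact: ltW (mlow x xs').
Qed.

End Poset.

Theorem mainTheorem2 (d : Order.disp_t) (T : porderType d) :
  three_plus_one_free T -> no_infinite_antichain T ->
  exists (Pt : (T -> Prop) -> Prop) (C : T -> Prop),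
    [/\ is_partition Pt,
        (forall B, Pt B -> antichain B),
        chain C
      & forall B, Pt B -> exists x, B x /\ C x].
Proof.
move=> H31 HA.
have Nf := Nfin H31 HA.
pose D (x v : T) := v = x \/ x >< v.
pose R (x a y b : T) := [/\ a >=< b, (x < y -> a <> b) & (a = y -> b = y)].
have Dfin : forall x, exists s : seq T, forall v, D x v -> v \in s.
  move=> x; have [s Hs] := Nf x; exists (x :: s) => v [->|xv].
    by rewrite inE eqxx.
  by rewrite inE Hs ?orbT.
have [f Hf] : exists f : T -> T, forall x y, R x (f x) y (f y).
  apply: (@compactness T D R Dfin) => s.
  have [p [H1 H2 _]] := mirsky_n (leqnn (size s)).
  exists p; split.
    by move=> x xs; have [_ ? _] := H1 x xs; split.
  move=> x y xs ys; have [c1 c2] := H2 x y xs ys; split => // pxy.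
  by rewrite -pxy; have [_ _ ->] := H1 x xs.
have idem x : f (f x) = f x by have [_ _ ->] := Hf x (f x).
exists (fun B => exists c, f c = c /\ B = (fun x => f x = c)), (fun c => f c = c).
split.
- split.
  + by move=> B [c [fc ->]]; exists c.
  + by move=> x; exists (fun y => f y = f x); split => //; exists (f x).
  + by move=> B B' [c [fc ->]] [c' [fc' ->]] [x [<- <-]].
- move=> B [c [fc ->]] x y fx fy xy; apply: incI => h.
    have [_ H _] := Hf x y; apply: H; last by rewrite fx fy.
    by rewrite lt_neqAle h andbT; apply/eqP.
  have [_ H _] := Hf y x; apply: H; last by rewrite fx fy.
  by rewrite lt_neqAle h andbT; apply/eqP => /esym.
- by move=> x y fx fy; have [H _ _] := Hf x y; rewrite -fx -fy.
- by move=> B [c [fc ->]]; exists c.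
Qed.
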